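(* Let $n, M \ge 2$ be integers and let $W_1, \dots, W_M \in \mathbb{R}^{n \times n}$ be weighted adjacency matrices (nonnegative entries) of a time-evolving graph on the fixed vertex set $\{v_1, \dots, v_n\}$, such that every row of each $W_t$ has positive sum. Let $S_t = D_t^{-1} W_t$, where $D_t = \mathrm{diag}\big(\sum_j (W_t)_{1j}, \dots, \sum_j (W_t)_{nj}\big)$, be the row-stochastic transition matrices. Let $\boldsymbol{\mu}_1 = \frac{1}{n}\mathbb{1}$ be the uniform density and define $\boldsymbol{\mu}_{t+1} = S_t^\top \boldsymbol{\mu}_t$ for $t = 1, \dots, M-1$; assume all entries of $\boldsymbol{\mu}_t$ are strictly positive for all $t \in \{1, \dots, M\}$, and let $D_{\mu_t} = \mathrm{diag}(\boldsymbol{\mu}_t)$. Define $K_t = S_t$ and $T_t = D_{\mu_{t+1}}^{-1} S_t^\top D_{\mu_t}$ for $t = 1, \dots, M-1$, and let $\mathbf{C} \in \mathbb{R}^{nM \times nM}$ be the block matrix with $n \times n$ blocks $\mathbf{C}_{[s,r]}$ ($s, r \in \{1,\dots,M\}$) given by: $\mathbf{C}_{[1,2]} = K_1$; for $2 \le t \le M-1$, $\mathbf{C}_{[t,t-1]} = \tfrac{1}{2} T_{t-1}$ and $\mathbf{C}_{[t,t+1]} = \tfrac12 K_t$; $\mathbf{C}_{[M,M-1]} = T_{M-1}$; and all other blocks zero. Then: (i) all eigenvalues of $\mathbf{C}$ are real and contained in the interval $[-1, 1]$; (ii) the spectrum of $\mathbf{C}$ is symmetric about zero, i.e., if $\lambda$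 is an eigenvalue of $\mathbf{C}$ then so is $-\lambda$.
   Context: Equivalently, $\mathbf{C} = \mathbf{B}^{-1}\mathbf{A}$, where $\mathbf{A}$ is the symmetric block-tridiagonal matrix with zero diagonal blocks, super-diagonal blocks $C_{t(t+1)} = D_{\mu_t} S_t$ and sub-diagonal blocks $C_{(t+1)t} = C_{t(t+1)}^\top$, and $\mathbf{B}$ is block diagonal with blocks $D_{\mu_1}, 2D_{\mu_2}, \dots, 2D_{\mu_{M-1}}, D_{\mu_M}$. This matrix arises from a multiview canonical correlation analysis maximizing $\sum_{t=1}^{M-1} \mathbf{f}_t^\top C_{t(t+1)} \mathbf{f}_{t+1}$ subject to $\mathbf{f}_t^\top D_{\mu_t} \mathbf{f}_t = 1$. *)

(* Defs.v *)
From HB Require Import structures.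
From mathcomp Require Import all_boot all_order all_algebra.
From mathcomp Require Import reals.
From mathcomp Require Import complex.
Set Implicit Arguments. Unset Strict Implicit. Unset Printing Implicit Defensive.
Import Order.TTheory GRing.Theory Num.Theory.
Local Open Scope ring_scope.

Section Defs.
Variable R : realType.
Variable n M : nat.
(* W t : 'M_n, with time index t = 0, ..., M-1 standing for W_1, ..., W_M. *)
Variable W : nat -> 'M[R]_n.

Definition degmx (t : nat) : 'M[R]_n := diag_mx (\row_i \sum_j W t i j).
Definition transmx (t : nat) : 'M[R]_n := invmx (degmx t) *m W t.

(* mu t is the column vector mu_{t+1}: mu_1 = 1/n * 1, mu_{t+1} = S_t^T mu_t *)
Fixpoint mu (t : nat) : 'cV[R]_n :=
  match t with
  | 0 => const_mx (n%:R)^-1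
  | t'.+1 => (transmx t')^T *m mu t'
  end.

Definition Dmu (t : nat) : 'M[R]_n := diag_mx (mu t)^T.

Definition Kmx (t : nat) : 'M[R]_n := transmx t.
Definition Tmx (t : nat) : 'M[R]_n :=
  invmx (Dmu t.+1) *m (transmx t)^T *m Dmu t.

(* Block (s, r) of C, with 0-based block indices (paper's [s+1, r+1]). *)
Definition Cblock (s r : nat) : 'M[R]_n :=
  if (s == 0%N) && (r == 1%N) then Kmx 0
  else if (s == M.-1) && (r.+1 == s) then Tmx M.-2
  else if (0 < s < M.-1)%N && (r.+1 == s) then 2^-1 *: Tmx r
  else if (0 < s < M.-1)%N && (r == s.+1) then 2^-1 *: Kmx s
  else 0.

(* index k of 'I_(M*n) <-> (block index, position in block), with
   k = block * n + position (lexicographic enumeration of 'I_M * 'I_n). *)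
Definition blk_of (k : 'I_(M * n)) : 'I_M * 'I_n :=
  enum_val (cast_ord (esym (mxvec_cast M n)) k).

Definition Cmx : 'M[R]_(M * n) :=
  \matrix_(k, l) Cblock (blk_of k).1 (blk_of l).1 (blk_of k).2 (blk_of l).2.
End Defs.

Definition cplx_mx (R : realType) (m : nat) (A : 'M[R]_m) : 'M[R[i]]_m :=
  map_mx (fun x => Complex x 0) A.

(* Main.v *)
Require Import Defs.
From HB Require Import structures.
From mathcomp Require Import all_boot all_order all_algebra.
From mathcomp Require Import reals complex.
From mathcomp Require Import ring lra zify.
Import Order.TTheory GRing.Theory Num.Theory.
Set Implicit Arguments. Unset Strict Implicit.
Local Open Scope ring_scope.
Section Gen.
Variable R : realType.

Lemma eig_row (N : nat) (A : 'M[R]_N) (v : 'rV[R[i]]_N) (a : R[i]) :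
  v *m cplx_mx A = a *: v ->
  forall l, \sum_k v 0 k * (A k l)%:C%C = a * v 0 l.
Proof.
move=> /matrixP H l; have := H 0 l; rewrite !mxE => <-.
by apply: eq_bigr => k _; rewrite mxE.
Qed.

Lemma rv_nz (N : nat) (v : 'rV[R[i]]_N) : v != 0 -> exists l, v 0 l != 0.
Proof.
move=> vn0; apply/existsP; apply: contraR vn0; rewrite negb_exists => /forallP H.
by apply/eqP/rowP => l; rewrite mxE; apply/eqP; have := H l; rewrite negbK.
Qed.

Lemma eig_bound (N : nat) (C : 'M[R]_N) (lam : R[i]) :
  (forall k l, 0 <= C k l) -> (forall k, \sum_l C k l = 1) ->
  eigenvalue (cplx_mx C) lam -> `|lam| <= 1.
Proof.
move=> C0 C1 /eigenvalueP [v Hv vn0].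
have Hl := eig_row Hv.
have S0 : 0 < \sum_l `|v 0 l|.
  have [l vl] := rv_nz vn0.
  rewrite lt0r sumr_ge0 // andbT; apply/negP => /eqP H.
  have := psumr_eq0P (fun i _ => normr_ge0 (v 0 i)) H (i:=l) isT.
  by move/eqP; rewrite normr_eq0 (negbTE vl).
have H1 : \sum_l `|\sum_k v 0 k * (C k l)%:C%C| <= \sum_l \sum_k `|v 0 k| * (C k l)%:C%C.
  apply: ler_sum => l _; apply: le_trans (ler_norm_sum _ _ _) _.
  apply: ler_sum => k _; rewrite normrM [`|(C k l)%:C%C|]ger0_norm // ler0c //.
have H2 : \sum_l \sum_k `|v 0 k| * (C k l)%:C%C = \sum_k `|v 0 k|.
  rewrite exchange_big /=; apply: eq_bigr => k _.
  by rewrite -mulr_sumr -rmorph_sum /= C1 mulr1.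
have : `|lam| * \sum_l `|v 0 l| <= 1 * \sum_l `|v 0 l|.
  rewrite mul1r mulr_sumr.
  under eq_bigr => l _ do rewrite -normrM -Hl.
  by rewrite -H2.
by rewrite ler_pM2r.
Qed.

Lemma eig_sym (N : nat) (C : 'M[R]_N) (lam : R[i]) (s : 'I_N -> R) :
  (forall k, s k * s k = 1) -> (forall k l, C k l != 0 -> s k = - s l) ->
  eigenvalue (cplx_mx C) lam -> eigenvalue (cplx_mx C) (- lam).
Proof.
move=> s1 sC /eigenvalueP [v Hv vn0].
have Hl := eig_row Hv.
apply/eigenvalueP; exists (\row_k ((s k)%:C%C * v 0 k)).
  apply/rowP => l; rewrite !mxE.
  rewrite (eq_bigr (fun k => - (s l)%:C%C * (v 0 k * (C k l)%:C%C))).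
    by rewrite -mulr_sumr Hl; ring.
  move=> k _; rewrite !mxE; have [->|nz] := eqVneq (C k l) 0.
    by rewrite !mulr0.
  by rewrite (sC _ _ nz) rmorphN /= -mulrA.
apply: contraNN vn0 => /eqP/matrixP H; apply/eqP/rowP => k.
have := H 0 k; rewrite !mxE => H2.
by rewrite -[v 0 k]mul1r -(rmorph1 (real_complex R)) -(s1 k) rmorphM -mulrA H2 mulr0.
Qed.

Lemma eig_real (N : nat) (C : 'M[R]_N) (lam : R[i]) (d : 'I_N -> R) :
  (forall k, 0 < d k) -> (forall k l, d k * C k l = d l * C l k) ->
  eigenvalue (cplx_mx C) lam -> exists r : R, lam = Complex r 0.
Proof.
move=> d0 dC /eigenvalueP [v Hv vn0].
have Hl := eig_row Hv.
pose w k := v 0 k / (d k)%:C%C.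
have dnz k : (d k)%:C%C != 0 :> R[i].
  by rewrite (inj_eq (@complexI R)); apply: lt0r_neq0.
have vw k : v 0 k = (d k)%:C%C * w k by rewrite /w mulrC divfK.
pose F k l := (d k * C k l)%:C%C * (w k * conjc (w l)).
have HL : \sum_l \sum_k F k l = lam * \sum_l (d l)%:C%C * (w l * conjc (w l)).
  rewrite mulr_sumr; apply: eq_bigr => l _.
  have -> : lam * ((d l)%:C%C * (w l * conjc (w l))) = (lam * v 0 l) * conjc (w l).
    by rewrite (vw l); ring.
  rewrite -Hl mulr_suml.
  apply: eq_bigr => k _; rewrite /F vw rmorphM /=; ring.
have FJ k l : conjc (F k l) = F l k.
  rewrite /F rmorphM /= oppr0 complexr0 [conjc (w k * _)]rmorphM /= conjcK dC; ring.
have LJ : conjc (\sum_l \sum_k F k l) = \sum_l \sum_k F k l.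
  rewrite rmorph_sum /=; under eq_bigr => l _ do rewrite rmorph_sum /=.
  under eq_bigr => l _ do under eq_bigr => k _ do rewrite FJ.
  by rewrite exchange_big.
set Q := (X in lam * X) in HL.
have QJ : conjc Q = Q.
  rewrite /Q rmorph_sum /=; apply: eq_bigr => l _.
  by rewrite rmorphM /= oppr0 complexr0 [conjc (w l * _)]rmorphM /= conjcK; ring.
have Qnz : Q != 0.
  have [l vl] := rv_nz vn0.
  apply/negP => /eqP HQ.
  have Hge : forall l, true -> 0 <= (d l)%:C%C * (w l * conjc (w l)).
    by move=> l' _; rewrite mulr_ge0 ?mulcJ_ge0 // ler0c ltW.
  have := psumr_eq0P Hge HQ (i:=l) isT.
  move/eqP; rewrite mulf_eq0 (negbTE (dnz l)) /= mulf_eq0 conjc_eq0 orbb => /eqP wl.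
  by move: vl; rewrite vw wl mulr0 eqxx.
have : conjc lam * Q = lam * Q.
  by rewrite -{1}QJ -rmorphM /= -HL LJ.
move/(mulIf Qnz); clear -R; case: lam => a b [] Hb.
exists a; congr Complex; lra.
Qed.
End Gen.

Lemma invmx_diag (F : fieldType) m (d : 'rV[F]_m) :
  (forall i, d 0 i != 0) -> invmx (diag_mx d) = diag_mx (\row_i (d 0 i)^-1).
Proof.
move=> dnz.
have H : diag_mx (\row_i (d 0 i)^-1) *m diag_mx d = 1%:M.
  by apply/matrixP => i j; rewrite mulmx_diag !mxE mulVf.
have [_ Hu] := mulmx1_unit H.
by rewrite -[invmx _]mul1mx -H -mulmxA mulmxV // mulmx1.
Qed.

Section Spec.
Variable R : realType.
Variables n M : nat.
Variable W : nat -> 'M[R]_n.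
Hypothesis HM : (2 <= M)%N.
Hypothesis HW0 : forall t, (t < M)%N -> forall i j, 0 <= W t i j.
Hypothesis Hdeg : forall t, (t < M)%N -> forall i, 0 < \sum_j W t i j.
Hypothesis Hmu : forall t, (t < M)%N -> forall i, 0 < mu W t i 0.

Lemma K_E t i j : (t < M)%N -> Kmx W t i j = W t i j / \sum_k W t i k.
Proof.
move=> tM; rewrite /Kmx /transmx /degmx invmx_diag.
  by rewrite mul_diag_mx !mxE mulrC.
by move=> i'; rewrite mxE lt0r_neq0 // Hdeg.
Qed.

Lemma K_ge0 t i j : (t < M)%N -> 0 <= Kmx W t i j.
Proof. by move=> tM; rewrite K_E // divr_ge0 // ?HW0 // ltW // Hdeg. Qed.

Lemma K_sum t i : (t < M)%N -> \sum_j Kmx W t i j = 1.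
Proof.
move=> tM; under eq_bigr => j _ do rewrite K_E //.
by rewrite -mulr_suml divff // lt0r_neq0 // Hdeg.
Qed.

Lemma mu_S t i : mu W t.+1 i 0 = \sum_j Kmx W t j i * mu W t j 0.
Proof. by rewrite /= mxE; apply: eq_bigr => j _; rewrite mxE. Qed.

Lemma T_E t i j : (t.+1 < M)%N ->
  Tmx W t i j = (mu W t.+1 i 0)^-1 * Kmx W t j i * mu W t j 0.
Proof.
move=> tM; rewrite /Tmx /Dmu invmx_diag.
  by rewrite mul_diag_mx mul_mx_diag !mxE.
by move=> i'; rewrite mxE lt0r_neq0 // Hmu.
Qed.

Lemma T_ge0 t i j : (t.+1 < M)%N -> 0 <= Tmx W t i j.
Proof.
move=> tM; rewrite T_E // mulr_ge0 // ?mulr_ge0 ?K_ge0 ?invr_ge0 ?ltW ?Hmu //; lia.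
Qed.

Lemma T_sum t i : (t.+1 < M)%N -> \sum_j Tmx W t i j = 1.
Proof.
move=> tM; under eq_bigr => j _ do rewrite T_E // -mulrA.
by rewrite -mulr_sumr -mu_S mulVf // lt0r_neq0 // Hmu.
Qed.

Definition cc (s : nat) : R := if (s == 0%N) || (s == M.-1) then 1 else 2.

Lemma cc_gt0 s : 0 < cc s.
Proof. by rewrite /cc; case: ifP. Qed.

Lemma CblockE s r i j : (s < M)%N -> (r < M)%N ->
  Cblock M W s r i j = if r == s.+1 then (cc s)^-1 * Kmx W s i j
    else if r.+1 == s then (cc s)^-1 * Tmx W s.-1 i j else 0.
Proof.
move=> sM rM; rewrite /Cblock /cc.
have [->|s0] := eqVneq s 0%N.
  rewrite /= (_ : (0 == M.-1)%N = false); last by apply/eqP; lia.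
  have [r1|r1] := eqVneq r 1%N; first by subst r; rewrite /= invr1 mul1r.
  by rewrite /= mxE.
have [sE|sM1] := eqVneq s M.-1.
  rewrite /= (_ : (r == s.+1) = false); last by apply/eqP; lia.
  have [rs|rs] := eqVneq r.+1 s; last by rewrite /= !andbF !mxE.
  by rewrite /= invr1 mul1r sE.
rewrite /=.
have -> : (0 < s < M.-1)%N by lia.
rewrite /=.
have [rs|rs] := eqVneq r.+1 s.
  rewrite (_ : (r == s.+1) = false); last by apply/eqP; lia.
  by rewrite mxE -rs.
have [rs2|rs2] := eqVneq r s.+1; by rewrite ?mxE.
Qed.

Lemma blk_sum (V : nmodType) (F : 'I_M * 'I_n -> V) :
  \sum_(l : 'I_(M * n)) F (blk_of l) = \sum_(r < M) \sum_(j < n) F (r, j).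
Proof.
pose h (p : 'I_M * 'I_n) : 'I_(M * n) := cast_ord (mxvec_cast M n) (enum_rank p).
have hK : cancel h (@blk_of n M).
  by move=> p; rewrite /h /blk_of cast_ordK enum_rankK.
have hK' : cancel (@blk_of n M) h.
  by move=> k; rewrite /h /blk_of enum_valK cast_ordKV.
rewrite (reindex h) /=; last by exists (@blk_of n M) => [p _|k _]; [exact: hK|exact: hK'].
under eq_bigr do rewrite hK.
by rewrite pair_bigA /=; apply: eq_bigr => -[r j].
Qed.

Lemma sum_pick (x : nat) (a : R) :
  \sum_(r < M) (if (r : nat) == x then a else 0) = if (x < M)%N then a else 0.
Proof.
rewrite -big_mkcond /=; case: ifP => xM.
  by rewrite (big_pred1 (Ordinal xM)) // => r; rewrite /= -val_eqE.
by rewrite big_pred0 // => r; apply/eqP => e; move: (ltn_ord r); rewrite e xM.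
Qed.

Lemma sum_pickS (y : nat) (a : R) :
  \sum_(r < M) (if (r : nat).+1 == y then a else 0) =
  if (0 < y)%N && (y <= M)%N then a else 0.
Proof.
case: y => [|y] /=; first by rewrite big1.
by under eq_bigr do rewrite eqSS; rewrite sum_pick.
Qed.

Lemma C_ge0 k l : 0 <= Cmx M W k l.
Proof.
rewrite mxE CblockE //.
set s := (blk_of k).1; set r := (blk_of l).1.
have sM : (s < M)%N := ltn_ord _.
have rM : (r < M)%N := ltn_ord _.
have c0 : 0 <= (cc s)^-1 by rewrite invr_ge0 ltW // cc_gt0.
case: ifP => [/eqP e|_]; first by rewrite mulr_ge0 // K_ge0.
case: ifP => [/eqP e|_] //; rewrite mulr_ge0 // T_ge0 //; lia.
Qed.

Lemma C_sum k : \sum_l Cmx M W k l = 1.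
Proof.
set s := (blk_of k).1; set i := (blk_of k).2.
have sM : (s < M)%N := ltn_ord _.
have -> : \sum_l Cmx M W k l = \sum_(r < M) \sum_(j < n) Cblock M W s r i j.
  by rewrite -(blk_sum (fun p => Cblock M W s p.1 i p.2)); apply: eq_bigr => l _; rewrite mxE.
have E (r : 'I_M) : \sum_j Cblock M W s r i j =
   (if (r : nat) == s.+1 then (cc s)^-1 else 0) + (if (r : nat).+1 == s then (cc s)^-1 else 0).
  under eq_bigr do rewrite CblockE //.
  have [e|ne] := eqVneq (r : nat) s.+1.
    rewrite (_ : (r.+1 == s) = false) ?addr0; last by apply/eqP; lia.
    by rewrite -mulr_sumr K_sum // mulr1.
  have [e2|ne2] := eqVneq (r : nat).+1 s.
    by rewrite add0r -mulr_sumr T_sum ?mulr1 //; lia.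
  by rewrite big1 // addr0.
under eq_bigr do rewrite E.
rewrite big_split /= sum_pick sum_pickS /cc.
have [->|s0] := eqVneq (s : nat) 0%N.
  rewrite /= (_ : (1 < M)%N = true) ?invr1 ?addr0 //; lia.
have [sE|sM1] := eqVneq (s : nat) M.-1.
  rewrite orbT invr1 (_ : (s.+1 < M)%N = false); last by apply/negbTE; lia.
  rewrite (_ : (0 < s)%N && (s <= M)%N = true) ?add0r //; lia.
rewrite /= (_ : (s.+1 < M)%N = true); last by lia.
rewrite (_ : (0 < s)%N && (s <= M)%N = true); last by lia.
lra.
Qed.

Definition dw (k : 'I_(M * n)) : R :=
  cc (blk_of k).1 * mu W (blk_of k).1 (blk_of k).2 0.

Lemma dw_gt0 k : 0 < dw k.
Proof. by rewrite /dw mulr_gt0 ?cc_gt0 ?Hmu. Qed.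

Lemma dw_bal k l : dw k * Cmx M W k l = dw l * Cmx M W l k.
Proof.
rewrite /dw !mxE !CblockE //.
set s := (blk_of k).1; set r := (blk_of l).1.
set i := (blk_of k).2; set j := (blk_of l).2.
have sM : (s < M)%N := ltn_ord _.
have rM : (r < M)%N := ltn_ord _.
have ccnz x : cc x != 0 by rewrite lt0r_neq0 ?cc_gt0.
have munz t x : (t < M)%N -> mu W t x 0 != 0 by move=> tM; rewrite lt0r_neq0 ?Hmu.
have [e|ne] := eqVneq (r : nat) s.+1.
  rewrite (_ : ((s : nat) == r.+1) = false); last by apply/eqP; lia.
  rewrite e /= T_E; last by rewrite -e.
  have mnz : mu W s.+1 j 0 != 0 by apply: munz; rewrite -e.
  by field; rewrite !ccnz !andbT; exact: mnz.
have [e|ne2] := eqVneq (r : nat).+1 s.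
  rewrite -e /= T_E; last by rewrite e.
  have mnz : mu W r.+1 i 0 != 0 by apply: munz; rewrite e.
  by field; rewrite !ccnz !andbT; exact: mnz.
by rewrite !mulr0.
Qed.

Definition sg (k : 'I_(M * n)) : R := (-1) ^+ (blk_of k).1.

Lemma sg_sq k : sg k * sg k = 1.
Proof. by rewrite /sg -exprD addnn -mul2n exprM expr2 mulrNN mulr1 expr1n. Qed.

Lemma sg_C k l : Cmx M W k l != 0 -> sg k = - sg l.
Proof.
rewrite /sg mxE CblockE //.
set s := (blk_of k).1; set r := (blk_of l).1.
have [e|ne] := eqVneq (r : nat) s.+1.
  by move=> _; rewrite e exprS mulN1r opprK.
have [e|ne2] := eqVneq (r : nat).+1 s.
  by move=> _; rewrite -e exprS mulN1r.
by rewrite eqxx.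
Qed.

End Spec.


Theorem proposition1 (R : realType) (n M : nat) (W : nat -> 'M[R]_n) :
  (2 <= n)%N -> (2 <= M)%N ->
  (forall t, (t < M)%N -> forall i j, 0 <= W t i j) ->
  (forall t, (t < M)%N -> forall i, 0 < \sum_j W t i j) ->
  (forall t, (t < M)%N -> forall i, 0 < mu W t i 0) ->
  (forall lambda : R[i], eigenvalue (cplx_mx (Cmx M W)) lambda ->
     exists2 r : R, lambda = Complex r 0 & -1 <= r <= 1) /\
  (forall lambda : R[i], eigenvalue (cplx_mx (Cmx M W)) lambda ->
     eigenvalue (cplx_mx (Cmx M W)) (- lambda)).
Proof.
move=> _ HM HW0 Hdeg Hmu; split.
  move=> lam Hl.
  have [a ea] := eig_real (dw_gt0 Hmu) (dw_bal HM Hmu) Hl.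
  exists a => //.
  have := eig_bound (C_ge0 HM HW0 Hdeg Hmu) (C_sum HM Hdeg Hmu) Hl.
  rewrite ea normc_def /= expr0n /= addr0 sqrtr_sqr -(rmorph1 (real_complex R)).
  by rewrite lecR ler_norml.
move=> lam Hl.
exact: (eig_sym (@sg_sq R n M) (sg_C (R:=R) (W:=W) HM) Hl).
Qed.
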